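(* Let $(D,\prec_\vdash,\prec_\dashv,\succ_\vdash,\succ_\dashv,\alpha)$ be a Hom-quadri-dendriform algebra. Define $x\vdash y=x\prec_\vdash y+x\succ_\vdash y$ and $x\dashv y=x\prec_\dashv y+x\succ_\dashv y$ for all $x,y\in D$. Then $(D,\vdash,\dashv,\alpha)$ is a Hom-diassociative algebra.
   Context: All vector spaces are over a field of characteristic zero. A Hom-quadri-dendriform algebra is a tuple $(D,\prec_\vdash,\prec_\dashv,\succ_\vdash,\succ_\dashv,\alpha)$ with $D$ a vector space, four bilinear operations $\prec_\vdash,\prec_\dashv,\succ_\vdash,\succ_\dashv:D\times D\to D$ and a linear map $\alpha:D\to D$ such that for all $x,y,z\in D$: (Q1) $(x\prec_\vdash y)\prec_\vdash\alpha(z)=(x\prec_\dashv y)\prec_\vdash\alpha(z)=\alpha(x)\prec_\vdash(y\prec_\vdash z+y\succ_\vdash z)$; (Q2) $(x\succ_\vdash y)\prec_\vdash\alpha(z)=(x\succ_\dashv y)\prec_\vdash\alpha(z)=\alpha(x)\succ_\vdash(y\prec_\vdash z)$; (Q3) $\alpha(x)\succ_\vdash(y\succ_\vdash z)=(x\prec_\vdash y+x\succ_\vdash y)\succ_\vdash\alpha(z)=(x\prec_\dashv y+x\succ_\dashv y)\succ_\vdash\alpha(z)$; (Q4) $\alpha(x)\succ_\vdash(y\succ_\vdash z)=(x\prec_\dashv y+x\succ_\vdash y)\succ_\vdash\alpha(z)=(x\prec_\vdash y+x\succ_\dashv y)\succ_\vdash\alpha(z)$; (Q5) $(x\prec_\vdash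 y)\prec_\dashv\alpha(z)=\alpha(x)\prec_\vdash(y\prec_\dashv z+y\succ_\dashv z)$; (Q6) $(x\succ_\vdash y)\prec_\dashv\alpha(z)=\alpha(x)\succ_\vdash(y\prec_\dashv z)$; (Q7) $\alpha(x)\succ_\vdash(y\succ_\dashv z)=(x\prec_\vdash y+x\succ_\vdash y)\succ_\dashv\alpha(z)$; (Q8) $(x\prec_\dashv y)\prec_\dashv\alpha(z)=\alpha(x)\prec_\dashv(y\prec_\vdash z+y\succ_\vdash z)=\alpha(x)\prec_\dashv(y\prec_\dashv z+y\succ_\dashv z)$; (Q9) $(x\prec_\dashv y)\prec_\dashv\alpha(z)=\alpha(x)\prec_\dashv(y\prec_\vdash z+y\succ_\dashv z)=\alpha(x)\prec_\dashv(y\prec_\dashv z+y\succ_\vdash z)$; (Q10) $(x\succ_\dashv y)\prec_\dashv\alpha(z)=\alpha(x)\succ_\dashv(y\prec_\vdash z)=\alpha(x)\succ_\dashv(y\prec_\dashv z)$; (Q11) $\alpha(x)\succ_\dashv(y\succ_\vdash z)=\alpha(x)\succ_\dashv(y\succ_\dashv z)=(x\prec_\dashv y+x\succ_\dashv y)\succ_\dashv\alpha(z)$. A Hom-diassociative algebra is a tuple $(D,\dashv,\vdash,\alpha)$ with $\dashv,\vdash$ bilinear and $\alpha$ linear such that for all $x,y,z\in D$: $(x\dashv y)\dashv\alpha(z)=\alpha(x)\dashv(y\dashv z)$; $(x\dashv y)\dashv\alpha(z)=\alpha(x)\dashv(y\vdash z)$; $(x\vdash y)\dashv\alpha(z)=\alpha(x)\vdash(y\dashv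 z)$; $(x\dashv y)\vdash\alpha(z)=\alpha(x)\vdash(y\vdash z)$; $(x\vdash y)\vdash\alpha(z)=\alpha(x)\vdash(y\vdash z)$. *)

(* Defs.v *)
From HB Require Import structures.
From mathcomp Require Import all_boot all_algebra.
Set Implicit Arguments. Unset Strict Implicit. Unset Printing Implicit Defensive.
Import GRing.Theory.
Local Open Scope ring_scope.

Definition bilinear_op (R : fieldType) (D : lmodType R) (op : D -> D -> D) : Prop :=
  (forall (a : R) (x y z : D), op (a *: x + y) z = a *: op x z + op y z) /\
  (forall (a : R) (x y z : D), op z (a *: x + y) = a *: op z x + op z y).

Definition linear_map (R : fieldType) (D : lmodType R) (f : D -> D) : Prop :=
  forall (a : R) (x y : D), f (a *: x + y) = a *: f x + f y.

(* Hom-quadri-dendriform algebra (D, <|-, <-|, >|-, >-|, alpha):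
   plv = prec_vdash, pld = prec_dashv, sgv = succ_vdash, sgd = succ_dashv *)
Definition hom_quadri_dendriform (R : fieldType) (D : lmodType R)
  (plv pld sgv sgd : D -> D -> D) (alpha : D -> D) : Prop :=
  bilinear_op plv /\ bilinear_op pld /\ bilinear_op sgv /\ bilinear_op sgd /\
  linear_map alpha /\
  forall x y z : D,
  (plv (plv x y) (alpha z) = plv (pld x y) (alpha z) /\
      plv (pld x y) (alpha z) = plv (alpha x) (plv y z + sgv y z) /\
      plv (sgv x y) (alpha z) = plv (sgd x y) (alpha z) /\
      plv (sgd x y) (alpha z) = sgv (alpha x) (plv y z) /\
      sgv (alpha x) (sgv y z) = sgv (plv x y + sgv x y) (alpha z) /\
      sgv (plv x y + sgv x y) (alpha z) = sgv (pld x y + sgd x y) (alpha z) /\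
      sgv (alpha x) (sgv y z) = sgv (pld x y + sgv x y) (alpha z) /\
      sgv (pld x y + sgv x y) (alpha z) = sgv (plv x y + sgd x y) (alpha z) /\
      pld (plv x y) (alpha z) = plv (alpha x) (pld y z + sgd y z) /\
      pld (sgv x y) (alpha z) = sgv (alpha x) (pld y z) /\
      sgv (alpha x) (sgd y z) = sgd (plv x y + sgv x y) (alpha z) /\
      pld (pld x y) (alpha z) = pld (alpha x) (plv y z + sgv y z) /\
      pld (alpha x) (plv y z + sgv y z) = pld (alpha x) (pld y z + sgd y z) /\
      pld (pld x y) (alpha z) = pld (alpha x) (plv y z + sgd y z) /\
      pld (alpha x) (plv y z + sgd y z) = pld (alpha x) (pld y z + sgv y z) /\
      pld (sgd x y) (alpha z) = sgd (alpha x) (plv y z) /\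
      sgd (alpha x) (plv y z) = sgd (alpha x) (pld y z) /\
      sgd (alpha x) (sgv y z) = sgd (alpha x) (sgd y z) /\
      sgd (alpha x) (sgd y z) = sgd (pld x y + sgd x y) (alpha z)).

Definition hom_diassociative (R : fieldType) (D : lmodType R)
  (dl dr : D -> D -> D) (alpha : D -> D) : Prop :=
  bilinear_op dl /\ bilinear_op dr /\ linear_map alpha /\
  forall x y z : D,
  ( dl (dl x y) (alpha z) = dl (alpha x) (dl y z) /\
      dl (dl x y) (alpha z) = dl (alpha x) (dr y z) /\
      dl (dr x y) (alpha z) = dr (alpha x) (dl y z) /\
      dr (dl x y) (alpha z) = dr (alpha x) (dr y z) /\
      dr (dr x y) (alpha z) = dr (alpha x) (dr y z)).

(* Main.v *)
Require Import Defs.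
From HB Require Import structures.
From mathcomp Require Import all_boot all_algebra.
Local Open Scope ring_scope.
Import GRing.Theory.

Lemma bil_addl (R : fieldType) (D : lmodType R) (op : D -> D -> D) :
  bilinear_op op -> forall x y z, op (x + y) z = op x z + op y z.
Proof. by move=> [H _] x y z; have := H 1 x y z; rewrite !scale1r. Qed.

Lemma bil_addr (R : fieldType) (D : lmodType R) (op : D -> D -> D) :
  bilinear_op op -> forall x y z, op z (x + y) = op z x + op z y.
Proof. by move=> [_ H] x y z; have := H 1 x y z; rewrite !scale1r. Qed.

Lemma bil_sum (R : fieldType) (D : lmodType R) (f g : D -> D -> D) :
  bilinear_op f -> bilinear_op g -> bilinear_op (fun x y => f x y + g x y).
Proof.
move=> [f1 f2] [g1 g2]; split=> a x y z.
  by rewrite f1 g1 scalerDr addrACA.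
by rewrite f2 g2 scalerDr addrACA.
Qed.

Theorem proposition3p3 (R : fieldType) (char0 : [pchar R] =i pred0)
  (D : lmodType R) (plv pld sgv sgd : D -> D -> D) (alpha : D -> D) :
  hom_quadri_dendriform plv pld sgv sgd alpha ->
  hom_diassociative (fun x y => pld x y + sgd x y)
                    (fun x y => plv x y + sgv x y) alpha.
Proof.
move=> [Ba [Bb [Bc [Bd [Al H]]]]].
split; first exact: bil_sum.
split; first exact: bil_sum.
split; first exact: Al.
move=> x y z.
have [Q1a [Q1b [Q2a [Q2b [Q3a [Q3b [Q4a [Q4b [Q5 [Q6 [Q7 [Q8a [Q8b [Q9a [Q9b [Q10a [Q10b [Q11a Q11b]]]]]]]]]]]]]]]]]] := H x y z.
have aL := @bil_addl _ _ _ Ba; have aR := @bil_addr _ _ _ Ba.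
have bL := @bil_addl _ _ _ Bb; have bR := @bil_addr _ _ _ Bb.
have cL := @bil_addl _ _ _ Bc; have cR := @bil_addr _ _ _ Bc.
have dL := @bil_addl _ _ _ Bd; have dR := @bil_addr _ _ _ Bd.
split.
  rewrite bL Q8a Q8b -Q11b dR -Q10b -Q10a; exact: esym (addrA _ _ _).
split.
  rewrite bL Q8a -Q11b dR Q11a -Q10a; exact: esym (addrA _ _ _).
split.
  rewrite bL Q5 Q6 -Q7 cR; exact: esym (addrA _ _ _).
split.
  rewrite aL Q1b Q2b -Q3b -Q3a cR; exact: esym (addrA _ _ _).
rewrite aL Q1a Q1b Q2a Q2b -Q3a cR; exact: esym (addrA _ _ _).
Qed.
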